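(* Let $n\geq 3$ and let $\mathcal{T}'\subseteq\mathcal{T}_n$ be such that for every $T\in\mathcal{T}_n$ there exists $T'\in\mathcal{T}'$ with $T\rhd T'$. Then $\chi(\mathrm{KG}(\mathcal{T}'))=n-2$.
   Context: Label the vertices of a convex $n$-gon by $1,\dots,n$ in cyclic order; $\mathrm{Diag}_n = \{\{i,j\} \subseteq [n]: i-j\not\equiv \pm1 \pmod n\}$; two diagonals cross if they meet in the interior of the polygon (their four endpoints are distinct and interleave cyclically). A triangulation is identified with its set of diagonals, and $\mathcal{T}_n$ is the set of triangulations. For a set system $\mathcal{F}$, $\mathrm{KG}(\mathcal{F})$ is the graph on $\mathcal{F}$ with $F,F'$ adjacent iff $F\cap F'=\emptyset$. Swapping relation: for $\{i,j\},\{i',j'\}\in\mathrm{Diag}_n$ written with $i<j$ and $i'<j'$, write $\{i,j\}\rhd\{i',j'\}$ if either $\{i,j\}$ and $\{i',j'\}$ do not cross (in particular $d\rhd d$ for every $d$), or $i'<i<j'<j<n$ and $j'-i>1$. For $T,T'\in\mathcal{T}_n$, write $T\rhd T'$ if $d\rhd d'$ for all $d\in T$ and $d'\in T'$. *)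

(* Defs.v *)
From mathcomp Require Import all_boot.
Set Implicit Arguments. Unset Strict Implicit. Unset Printing Implicit Defensive.

(* Vertices of the convex n-gon are labelled 1..n; we use the finite type
   'I_n.+1 (label 0 is never used by a diagonal).  A diagonal {i,j} is
   represented by the ordered pair (i, j) with 1 <= i < j <= n. *)
Definition vtx (n : nat) := 'I_n.+1.
Definition diagT (n : nat) := (vtx n * vtx n)%type.

(* {i,j} with i<j is a diagonal iff i - j is not = +-1 mod n,
   i.e. j - i >= 2 and (i,j) <> (1,n). *)
Definition is_diag (n : nat) (d : diagT n) : bool :=
  let i := nat_of_ord d.1 in let j := nat_of_ord d.2 in
  [&& 1 <= i, i < j, j <= n, 1 < j - i & ~~ ((i == 1) && (j == n))].

Definition cross (n : nat) (d d' : diagT n) : bool :=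
  let i := nat_of_ord d.1 in let j := nat_of_ord d.2 in
  let i' := nat_of_ord d'.1 in let j' := nat_of_ord d'.2 in
  [|| (i < i') && (i' < j) && (j < j') | (i' < i) && (i < j') && (j' < j)].

Definition is_triang (n : nat) (T : {set diagT n}) : Prop :=
  (forall d, d \in T -> is_diag d) /\
  (forall d d', d \in T -> d' \in T -> ~~ cross d d') /\
  (forall d, is_diag d -> d \notin T -> exists2 d', d' \in T & cross d d').

Definition swap_diag (n : nat) (d d' : diagT n) : bool :=
  let i := nat_of_ord d.1 in let j := nat_of_ord d.2 in
  let i' := nat_of_ord d'.1 in let j' := nat_of_ord d'.2 in
  ~~ cross d d' || [&& i' < i, i < j', j' < j, j < n & 1 < j' - i].

Definition swap_triang (n : nat) (T T' : {set diagT n}) : Prop :=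
  forall d d', d \in T -> d' \in T' -> swap_diag d d'.

Definition KG_colorable (T : finType) (F : {set {set T}}) (k : nat) : Prop :=
  exists c : {set T} -> nat,
    (forall A, A \in F -> c A < k) /\
    (forall A B, A \in F -> B \in F -> A != B -> A :&: B = set0 -> c A != c B).

Definition KG_chromatic_number (T : finType) (F : {set {set T}}) (k : nat) : Prop :=
  KG_colorable F k /\ (forall m, m < k -> ~ KG_colorable F m).

(* Main.v *)
Require Import Defs.
From mathcomp Require Import all_boot zify.
Set Implicit Arguments. Unset Strict Implicit. Unset Printing Implicit Defensive.

Ltac gen := repeat match goal with |- context [nat_of_ord ?x] =>
  move: (ltn_ord x); move: (nat_of_ord x) => ? end.
Ltac rev := repeat match goal with
  | H : is_true _ |- _ => revert H
  | H : (_ = _ :> nat) |- _ => revert H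
  | H : ~ _ |- _ => revert H end.
Ltac ar := rev; gen; lia.

Lemma diag_eq n (d d' : diagT n) :
  (d.1 : nat) = d'.1 -> (d.2 : nat) = d'.2 -> d = d'.
Proof. by case: d d' => [a b] [a' b'] /= /val_inj-> /val_inj->. Qed.

Lemma cross_sym n (d d' : diagT n) : cross d d' = cross d' d.
Proof. rewrite /cross; apply/idP/idP; ar. Qed.

Lemma cross_irr n (d : diagT n) : cross d d = false.
Proof. rewrite /cross; apply/negbTE; ar. Qed.

Definition shift m (d : diagT m) : diagT m.+1 := (lift ord0 d.1, lift ord0 d.2).

Lemma shift1 m (d : diagT m) : ((shift d).1 : nat) = d.1.+1.
Proof. exact: lift0. Qed.
Lemma shift2 m (d : diagT m) : ((shift d).2 : nat) = d.2.+1.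
Proof. exact: lift0. Qed.

Lemma shift_cross m (d d' : diagT m) : cross (shift d) (shift d') = cross d d'.
Proof. by rewrite /cross !shift1 !shift2 !ltnS. Qed.

Lemma shift_swap m (d d' : diagT m) : swap_diag (shift d) (shift d') = swap_diag d d'.
Proof. by rewrite /swap_diag shift_cross !shift1 !shift2 !ltnS subSS. Qed.

Lemma shift_diag m (d : diagT m) : is_diag d -> is_diag (shift d).
Proof. rewrite /is_diag !shift1 !shift2; ar. Qed.

Definition unshift m (e : diagT m.+1) : diagT m := (inord e.1.-1, inord e.2.-1).

Lemma unshiftK m (e : diagT m.+1) : 1 <= e.1 -> 1 <= e.2 -> shift (unshift e) = e.
Proof.
move=> h1 h2; apply: diag_eq; rewrite ?shift1 ?shift2 /= inordK; move: h1 h2; ar.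
Qed.

Lemma unshift_diag m (e : diagT m.+1) :
  is_diag e -> 2 <= e.1 -> ~~ ((e.1 == 2 :> nat) && (e.2 == m.+1 :> nat)) -> is_diag (unshift e).
Proof.
move=> hd h1 h2; move: hd h1 h2.
rewrite /is_diag /= !inordK; ar.
Qed.
Definition Zf n : {set diagT n} := [set d | is_diag d && (d.1 == 1 :> nat)].
Definition e2 n : diagT n := (inord 2, ord_max).
Definition Bf m (S : {set diagT m}) : {set diagT m.+1} := (@shift m) @: S :|: [set e2 m.+1].

Lemma e2_1 n : 2 <= n -> ((e2 n).1 : nat) = 2.
Proof. move=> h; rewrite /= inordK //; ar. Qed.
Lemma e2_2 n : ((e2 n).2 : nat) = n.
Proof. by []. Qed.

Lemma triang_nc n (T : {set diagT n}) d d' : is_triang T -> d \in T -> d' \in T -> ~~ cross d d'.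
Proof. by case=> _ [h _]; apply: h. Qed.
Lemma triang_diag n (T : {set diagT n}) d : is_triang T -> d \in T -> is_diag d.
Proof. by case=> h _; apply: h. Qed.

Lemma Z_triang n : 4 <= n -> is_triang (Zf n).
Proof.
move=> n4; split; [|split].
- by move=> d; rewrite inE => /andP[].
- move=> d d'; rewrite !inE /is_diag /cross; ar.
- move=> d hd; rewrite inE hd /= => hne.
  exists ((inord 1, inord d.1.+1) : diagT n).
    rewrite inE /is_diag /= !inordK; move: hd; rewrite /is_diag; ar.
  rewrite /cross /= !inordK; move: hd; rewrite /is_diag; ar.
Qed.

Lemma e2_in_triang n (T : {set diagT n}) : 4 <= n -> is_triang T ->
  (forall d, d \in T -> d.1 != 1 :> nat) -> e2 n \in T.
Proof.
move=> n4 hT h1; case: (boolP (e2 n \in T)) => // hn.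
have hd : is_diag (e2 n) by rewrite /is_diag e2_1 ?e2_2; ar.
case: hT => hD [_ hM]; case: (hM _ hd hn) => d' d'T.
have := h1 _ d'T; have := hD _ d'T.
rewrite /cross /is_diag e2_1 ?e2_2; ar.
Qed.

Lemma B_triang m (S : {set diagT m}) : 3 <= m -> is_triang S -> is_triang (Bf S).
Proof.
move=> m3 hS; have hD := triang_diag hS; have hN := triang_nc hS.
split; [|split].
- move=> d; rewrite !inE => /orP[/imsetP[d0 d0S ->]|/eqP->].
    exact/shift_diag/hD.
  rewrite /is_diag e2_1 ?e2_2; ar.
- move=> d d'; rewrite !inE => /orP[/imsetP[d0 d0S ->]|/eqP->] /orP[/imsetP[d1 d1S ->]|/eqP->].
  + by rewrite shift_cross hN.
  + have := hD _ d0S; rewrite /cross /is_diag shift1 shift2 e2_1 ?e2_2; ar.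
  + have := hD _ d1S; rewrite /cross /is_diag shift1 shift2 e2_1 ?e2_2; ar.
  + by rewrite cross_irr.
- move=> e he; rewrite !inE negb_or => /andP[hnS hne].
  case: (ltnP e.1 2) => h1.
    exists (e2 m.+1); first by rewrite !inE eqxx orbT.
    move: he; rewrite /cross /is_diag e2_1 ?e2_2; ar.
  have hne' : ~~ ((e.1 == 2 :> nat) && (e.2 == m.+1 :> nat)).
    apply/negP => /andP[/eqP a /eqP b]; move: hne; suff -> : e = e2 m.+1 by rewrite eqxx.
    by apply: diag_eq; [rewrite a e2_1 //; ar | rewrite b].
  have hu := unshift_diag he h1 hne'.
  have eK : shift (unshift e) = e by rewrite unshiftK //; move: he; rewrite /is_diag; ar.
  have hu' : unshift e \notin S by apply: contra hnS => h; rewrite -eK imset_f.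
  case: hS => _ [_ hM]; case: (hM _ hu hu') => d0 d0S hc.
  exists (shift d0); first by rewrite !inE imset_f.
  by rewrite -eK shift_cross.
Qed.
Lemma shift_max m (S : {set diagT m}) (e : diagT m.+1) : is_triang S -> is_diag e ->
  2 <= e.1 -> e != e2 m.+1 -> e \notin (@shift m) @: S ->
  exists2 d, d \in (@shift m) @: S & cross e d.
Proof.
move=> hS he h1 hne hnS.
have hne' : ~~ ((e.1 == 2 :> nat) && (e.2 == m.+1 :> nat)).
  apply/negP => /andP[/eqP a /eqP b]; move: hne; suff -> : e = e2 m.+1 by rewrite eqxx.
  by apply: diag_eq; [rewrite a e2_1 //; ar | rewrite b].
have hu := unshift_diag he h1 hne'.
have eK : shift (unshift e) = e by rewrite unshiftK //; move: he; rewrite /is_diag; ar.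
have hu' : unshift e \notin S by apply: contra hnS => h; rewrite -eK imset_f.
case: hS => _ [_ hM]; case: (hM _ hu hu') => d0 d0S hc.
exists (shift d0); first by rewrite imset_f.
by rewrite -eK shift_cross.
Qed.

Definition has m (S : {set diagT m}) (a b : nat) :=
  [exists d in S, (d.1 == a :> nat) && (d.2 == b :> nat)].

Lemma hasP m (S : {set diagT m}) a b :
  reflect (exists2 d, d \in S & ((d.1 : nat) = a /\ (d.2 : nat) = b)) (has S a b).
Proof.
apply: (iffP exists_inP) => [[d dS /andP[/eqP h1 /eqP h2]]|[d dS [h1 h2]]].
  by exists d.
by exists d => //; rewrite h1 h2 !eqxx.
Qed.

Definition apred m (S : {set diagT m}) : pred 'I_m.+1 :=
  [pred v : 'I_m.+1 | (v == 2 :> nat) || has S 1 v].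
Definition apex m (S : {set diagT m}) : nat := \max_(v in apred S) (v : nat).

Lemma apexP m (S : {set diagT m}) : 4 <= m -> is_triang S ->
  [/\ 2 <= apex S, (apex S).+1 <= m, (apex S == 2) || has S 1 (apex S),
      (apex S == m.-1) || has S (apex S) m &
      forall b, has S 1 b -> b <= apex S].
Proof.
move=> m4 hS; have hD := triang_diag hS; have hN := triang_nc hS.
have i2 : (inord 2 : 'I_m.+1) \in apred S by rewrite inE /= inordK ?eqxx //; ar.
have ge2 : 2 <= apex S.
  have := @leq_bigmax_cond _ (fun i => i \in apred S) (fun v : 'I_m.+1 => (v : nat)) _ i2; rewrite inordK //; ar.
have hmax : forall b, has S 1 b -> b <= apex S.
  move=> b /hasP[d dS [d1 d2]].
  have ib : (inord b : 'I_m.+1) \in apred S.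
    rewrite inE /=; apply/orP; right; apply/hasP; exists d => //; rewrite inordK //.
    rewrite -d2; ar.
  have := @leq_bigmax_cond _ (fun i => i \in apred S) (fun v : 'I_m.+1 => (v : nat)) _ ib; rewrite inordK //.
  rewrite -d2; ar.
have [w0 w0in w0E] : {i0 | i0 \in apred S & apex S = i0}.
  by apply: eq_bigmax_cond; apply/card_gt0P; exists (inord 2).
have P1 : (apex S == 2) || has S 1 (apex S) by rewrite w0E.
have le : (apex S).+1 <= m.
  case/orP: P1 => [/eqP->|/hasP[d dS [d1 d2]]]; first by ar.
  have := hD _ dS; rewrite /is_diag d1 d2; ar.
split => //.
case: (boolP (apex S == m.-1)) => //= hne.
case: (boolP (has S (apex S) m)) => // hn.
set d0 : diagT m := (inord (apex S), inord m).
have d01 : (d0.1 : nat) = apex S by rewrite /= inordK //; ar.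
have d02 : (d0.2 : nat) = m by rewrite /= inordK //; ar.
have hd0 : is_diag d0 by rewrite /is_diag d01 d02; ar.
have nd0 : d0 \notin S by apply: contra hn => h; apply/hasP; exists d0.
case: hS => _ [_ hM]; case: (hM _ hd0 nd0) => d' d'S hc.
have := hD _ d'S; move: hc; rewrite /cross d01 d02 => hc hd'.
case: (boolP (d'.1 == 1 :> nat)) => h1.
  have := hmax d'.2 (introT (hasP _ _ _) (ex_intro2 _ _ d' d'S (conj (eqP h1) erefl))).
  move: hc hd'; rewrite /is_diag; ar.
case/orP: P1 => [/eqP e2'|/hasP[d dS [d1 d2]]].
  move: hc hd' h1; rewrite /is_diag e2'; ar.
have := hN _ _ dS d'S; move: hc hd' h1; rewrite /cross /is_diag d1 d2; ar.
Qed.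
Definition e1w m (S : {set diagT m}) : diagT m.+1 := (inord 1, inord (apex S).+1).
Definition Af m (S : {set diagT m}) : {set diagT m.+1} := (@shift m) @: S :|: [set e1w S].

Lemma e1w_1 m (S : {set diagT m}) : ((e1w S).1 : nat) = 1.
Proof. by rewrite /= inordK. Qed.
Lemma e1w_2 m (S : {set diagT m}) : 4 <= m -> is_triang S -> ((e1w S).2 : nat) = (apex S).+1.
Proof. move=> m4 hS; have [_ h _ _ _] := apexP m4 hS; rewrite /= inordK //; ar. Qed.

Lemma A_triang m (S : {set diagT m}) : 4 <= m -> is_triang S -> is_triang (Af S).
Proof.
move=> m4 hS; have hD := triang_diag hS; have hN := triang_nc hS.
have [a2 a1 aP1 aP2 amax] := apexP m4 hS.
have E1 := e1w_1 S; have E2 := e1w_2 m4 hS.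
split; [|split].
- move=> d; rewrite !inE => /orP[/imsetP[d0 d0S ->]|/eqP->].
    exact/shift_diag/hD.
  rewrite /is_diag E1 E2; ar.
- have key : forall d0, d0 \in S -> ~~ cross (shift d0) (e1w S).
    move=> d0 d0S; have hd0 := hD _ d0S.
    rewrite /cross shift1 shift2 E1 E2; apply/negP => hc.
    case: (boolP (d0.1 == 1 :> nat)) => h1.
      have := amax d0.2 (introT (hasP _ _ _) (ex_intro2 _ _ d0 d0S (conj (eqP h1) erefl))).
      move: hc hd0; rewrite /is_diag; ar.
    case/orP: aP1 => [/eqP e2'|/hasP[d dS [d1 d2]]].
      move: hc hd0 h1; rewrite /is_diag e2'; ar.
    have := hN _ _ dS d0S; move: hc hd0 h1; rewrite /cross /is_diag d1 d2; ar.
  move=> d d'; rewrite !inE => /orP[/imsetP[d0 d0S ->]|/eqP->] /orP[/imsetP[d1 d1S ->]|/eqP->].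
  + by rewrite shift_cross hN.
  + exact: key.
  + by rewrite cross_sym key.
  + by rewrite cross_irr.
- move=> e he; rewrite !inE negb_or => /andP[hnS hne].
  case: (ltnP e.1 2) => h1.
    have ne2 : (e.2 : nat) != (apex S).+1.
      apply: contra hne => /eqP h2; apply/eqP/diag_eq; rewrite ?E1 ?E2 //.
      move: he h1; rewrite /is_diag; ar.
    case: (ltnP e.2 (apex S).+1) => h2.
      case/orP: aP1 => [/eqP e2'|/hasP[d dS [d1 d2]]].
        move: he h1 h2; rewrite /is_diag e2'; ar.
      exists (shift d); first by rewrite !inE imset_f.
      move: he h1 h2 ne2; rewrite /cross /is_diag shift1 shift2 d1 d2; ar.
    case/orP: aP2 => [/eqP e2'|/hasP[d dS [d1 d2]]].
      move: he h1 h2 ne2; rewrite /is_diag e2'; ar.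
    exists (shift d); first by rewrite !inE imset_f.
    move: he h1 h2 ne2; rewrite /cross /is_diag shift1 shift2 d1 d2; ar.
  case: (boolP (e == e2 m.+1)) => [/eqP->|ne2].
    exists (e1w S); first by rewrite !inE eqxx orbT.
    rewrite /cross E1 E2 e2_1 ?e2_2; ar.
  have [d dS hc] := shift_max hS he h1 ne2 hnS.
  by exists d => //; rewrite !inE dS.
Qed.
Definition R0 n (T1 T2 : {set diagT n}) := forall e, is_diag e ->
  (forall d, d \in T1 -> swap_diag d e) -> (forall d, d \in T2 -> swap_diag d e) -> False.

Lemma R0_sym n (T1 T2 : {set diagT n}) : R0 T1 T2 -> R0 T2 T1.
Proof. by move=> h e he h1 h2; apply: (h e). Qed.

Lemma e2_blocks n (e : diagT n) : 4 <= n -> is_diag e -> e.1 < 2 -> swap_diag (e2 n) e = false.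
Proof. move=> n4 he h1; move: he; rewrite /swap_diag /cross /is_diag e2_1 ?e2_2; ar. Qed.

Lemma e1w_blocks m (S : {set diagT m}) : 4 <= m -> is_triang S -> swap_diag (e1w S) (e2 m.+1) = false.
Proof.
move=> m4 hS; have [a2 a1 _ _ _] := apexP m4 hS.
rewrite /swap_diag /cross e1w_1 (e1w_2 m4 hS) e2_1 ?e2_2; ar.
Qed.

Lemma R0_shift m (S1 S2 : {set diagT m}) (T1 T2 : {set diagT m.+1}) e :
  R0 S1 S2 -> (forall d, d \in S1 -> shift d \in T1) -> (forall d, d \in S2 -> shift d \in T2) ->
  is_diag e -> 2 <= e.1 -> e != e2 m.+1 ->
  (forall d, d \in T1 -> swap_diag d e) -> (forall d, d \in T2 -> swap_diag d e) -> False.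
Proof.
move=> hR hT1 hT2 he h1 hne a1 a2.
have hne' : ~~ ((e.1 == 2 :> nat) && (e.2 == m.+1 :> nat)).
  apply/negP => /andP[/eqP a /eqP b]; move: hne; suff -> : e = e2 m.+1 by rewrite eqxx.
  by apply: diag_eq; [rewrite a e2_1 //; ar | rewrite b].
have hu := unshift_diag he h1 hne'.
have eK : shift (unshift e) = e by rewrite unshiftK //; move: he; rewrite /is_diag; ar.
apply: (hR _ hu) => d dS; rewrite -shift_swap eK.
  exact/a1/hT1.
exact/a2/hT2.
Qed.

Lemma shift_inA m (S : {set diagT m}) d : d \in S -> shift d \in Af S.
Proof. by move=> h; rewrite !inE imset_f. Qed.
Lemma shift_inB m (S : {set diagT m}) d : d \in S -> shift d \in Bf S.
Proof. by move=> h; rewrite !inE imset_f. Qed.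
Lemma e1w_in m (S : {set diagT m}) : e1w S \in Af S.
Proof. by rewrite !inE eqxx orbT. Qed.
Lemma e2_inB m (S : {set diagT m}) : e2 m.+1 \in Bf S.
Proof. by rewrite !inE eqxx orbT. Qed.

Lemma R0_ZB m (S : {set diagT m}) : 3 <= m -> R0 (Zf m.+1) (Bf S).
Proof.
move=> m3 e he hZ hB.
case: (ltnP e.1 2) => h1.
  by have := hB _ (e2_inB S); rewrite e2_blocks //; ar.
set d : diagT m.+1 := (inord 1, inord e.1.+1).
have d1 : (d.1 : nat) = 1 by rewrite /= inordK.
have d2 : (d.2 : nat) = e.1.+1 by rewrite /= inordK //; move: he; rewrite /is_diag; ar.
have := hZ d; rewrite /swap_diag /cross d1 d2 inE /is_diag d1 d2 eqxx andbT.
move: he h1; rewrite /is_diag; ar.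
Qed.

Lemma R0_AB m (S1 S2 : {set diagT m}) : 4 <= m -> is_triang S1 -> is_triang S2 ->
  R0 S1 S2 -> R0 (Af S1) (Bf S2).
Proof.
move=> m4 h1 h2 hR e he a1 a2.
case: (ltnP e.1 2) => hl.
  by have := a2 _ (e2_inB S2); rewrite e2_blocks //; ar.
case: (boolP (e == e2 m.+1)) => [/eqP ee|ne].
  by have := a1 _ (e1w_in S1); rewrite ee e1w_blocks.
exact: (R0_shift hR (@shift_inA _ _) (@shift_inB _ _) he hl ne a1 a2).
Qed.

Lemma R0_AA m (S1 S2 : {set diagT m}) : 4 <= m -> is_triang S1 -> is_triang S2 ->
  R0 S1 S2 -> R0 (Af S1) (Af S2).
Proof.
move=> m4 h1 h2 hR e he a1 a2.
case: (ltnP e.1 2) => hl; last first.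
  case: (boolP (e == e2 m.+1)) => [/eqP ee|ne].
    by have := a1 _ (e1w_in S1); rewrite ee e1w_blocks.
  exact: (R0_shift hR (@shift_inA _ _) (@shift_inA _ _) he hl ne a1 a2).
case: (ltnP e.2 4) => hk.
  (* e = (1,3) *)
  have no1 : forall S : {set diagT m}, is_triang S ->
      (forall d, d \in Af S -> swap_diag d e) -> e2 m \in S.
    move=> S hS aS; apply: e2_in_triang => // d dS; apply/negP => /eqP d1.
    have := aS _ (shift_inA dS); have := triang_diag hS dS.
    move: he hl hk d1; rewrite /swap_diag /cross /is_diag shift1 shift2; ar.
  have in1 := no1 _ h1 a1; have in2 := no1 _ h2 a2.
  have hd : is_diag (e2 m) by rewrite /is_diag e2_1 ?e2_2; ar.
  apply: (hR _ hd) => d dS; rewrite /swap_diag.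
    by rewrite (triang_nc h1 dS in1).
  by rewrite (triang_nc h2 dS in2).
set e0 : diagT m := (inord 1, inord e.2.-1).
have E1 : (e0.1 : nat) = 1 by rewrite /= inordK //; ar.
have E2 : (e0.2 : nat) = e.2.-1 by rewrite /= inordK //; move: he; rewrite /is_diag; ar.
have hd : is_diag e0 by move: he hl hk; rewrite /is_diag E1 E2; ar.
apply: (hR _ hd) => d dS.
  have := a1 _ (shift_inA dS); have := triang_diag h1 dS.
  move: he hl hk; rewrite /swap_diag /cross /is_diag shift1 shift2 E1 E2; ar.
have := a2 _ (shift_inA dS); have := triang_diag h2 dS.
move: he hl hk; rewrite /swap_diag /cross /is_diag shift1 shift2 E1 E2; ar.
Qed.
Definition Pn n := forall (c : {set diagT n} -> nat) k,
  (forall T, is_triang T -> c T < k) ->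
  (forall T1 T2, is_triang T1 -> is_triang T2 -> R0 T1 T2 -> c T1 != c T2) -> n - 2 <= k.

Lemma nodiag3 (d : diagT 3) : is_diag d = false.
Proof. apply/negbTE; rewrite /is_diag; ar. Qed.

Lemma empty_triang3 : is_triang (set0 : {set diagT 3}).
Proof.
split; [|split].
- by move=> d; rewrite in_set0.
- by move=> d d'; rewrite in_set0.
- by move=> d; rewrite nodiag3.
Qed.

Lemma P4 : Pn 4.
Proof.
move=> c k hk hp.
have hZ := @Z_triang 4 (leqnn _).
have hB := B_triang (leqnn 3) empty_triang3.
have := hp _ _ hZ hB (@R0_ZB 3 set0 (leqnn 3)).
have := hk _ hZ; have := hk _ hB; ar.
Qed.

Lemma squeeze_neq a x y : x != a -> y != a -> x != y ->
  (if x < a then x else x.-1) != (if y < a then y else y.-1).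
Proof. by move=> h1 h2 h3; case: ifP; case: ifP; ar. Qed.

Lemma Pstep m : 4 <= m -> Pn m -> Pn m.+1.
Proof.
move=> m4 IH c k hk hp.
have hZ := @Z_triang m.+1 (leqW m4).
set a := c (Zf m.+1).
have ak : a < k := hk _ hZ.
pose b S := if c (Af S) != a then c (Af S) else c (Bf S).
have hb : forall S, is_triang S -> (b S != a) && (b S < k).
  move=> S hS; rewrite /b; case: ifP => [-> /=|_].
    exact/hk/A_triang.
  have hB := B_triang (ltnW m4) hS.
  by rewrite hp //= ?hk //; apply: R0_sym; apply: R0_ZB; ar.
pose c' S := if b S < a then b S else (b S).-1.
suff : m - 2 <= k.-1 by ar.
apply: (IH c').
  move=> S hS; have := hb _ hS; rewrite /c'; case: ifP; ar.
move=> S1 S2 h1 h2 hR.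
have := hb _ h1; have := hb _ h2 => /andP[n2 _] /andP[n1 _].
apply: squeeze_neq => //.
have hA1 := A_triang m4 h1; have hA2 := A_triang m4 h2.
have hB1 := B_triang (ltnW m4) h1; have hB2 := B_triang (ltnW m4) h2.
move: n1 n2; rewrite /b; case: ifP => [x1|/negbFE/eqP x1]; case: ifP => [x2|/negbFE/eqP x2] => // n1 n2.
- exact: hp (R0_AA m4 h1 h2 hR).
- exact: hp (R0_AB m4 h1 h2 hR).
- exact: hp (R0_sym (R0_AB m4 h2 h1 (R0_sym hR))).
- by move: (hp _ _ hA1 hA2 (R0_AA m4 h1 h2 hR)); rewrite x1 x2 eqxx.
Qed.

Lemma Pall n : 4 <= n -> Pn n.
Proof.
elim: n => // n IH; rewrite leq_eqVlt => /orP[/eqP <-|h]; first exact: P4.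
by apply: Pstep => //; apply: IH.
Qed.
Lemma lower_bound n (Tp : {set {set diagT n}}) :
  3 <= n ->
  (forall T, T \in Tp -> is_triang T) ->
  (forall T : {set diagT n}, is_triang T ->
     exists2 T', T' \in Tp & swap_triang T T') ->
  forall m, m < n - 2 -> ~ KG_colorable Tp m.
Proof.
move=> n3 hTp hdom m hm [col [hcol hprop]].
rewrite leq_eqVlt in n3; case/orP: n3 => [/eqP en|n4].
  by subst n; have [T' T'in _] := hdom _ empty_triang3; have := hcol _ T'in; ar.
pose f (T : {set diagT n}) :=
  [pick T' in Tp | [forall d in T, forall d' in T', swap_diag d d']].
have fP : forall T, is_triang T -> exists2 T', f T = Some T' &
    T' \in Tp /\ swap_triang T T'.
  move=> T hT; rewrite /f; case: pickP => [T' /andP[T'in /forall_inP h]|none].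
    exists T' => //; split => // d d' dT d'T'; exact: (forall_inP (h d dT)).
  have [T' T'in sw] := hdom _ hT.
  have := none T'; rewrite T'in /=; move/negP; case.
  by apply/forall_inP => d dT; apply/forall_inP => d' d'T; apply: sw.
pose c T := if f T is Some T' then col T' else 0.
have := @Pall n n4 c m.
have -> : n - 2 <= m = false by apply/negbTE; ar.
move=> H; suff : false by []; apply: H.
  by move=> T hT; rewrite /c; have [T' -> [T'in _]] := fP _ hT; exact: hcol.
move=> T1 T2 h1 h2 hR; have [T1' e1 [in1 s1]] := fP _ h1; have [T2' e2' [in2 s2]] := fP _ h2.
rewrite /c e1 e2'.
have key : forall e, e \in T1' -> e \in T2' -> False.
  move=> e eT1 eT2; apply: (hR e).
  - exact: triang_diag (hTp _ in1) eT1.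
  - by move=> d dT; apply: s1.
  - by move=> d dT; apply: s2.
apply: hprop => //.
  apply/negP => /eqP eq; subst T2'.
  set d : diagT n := (inord 1, inord 3).
  have hd : is_diag d by rewrite /is_diag /= !inordK; ar.
  have hT := hTp _ in1.
  case: (boolP (d \in T1')) => [dI|dI]; first exact: (key d dI dI).
  by case: hT => _ [_ hM]; case: (hM _ hd dI) => d' d'T _; exact: (key d' d'T d'T).
apply/setP => e; rewrite inE in_set0; apply/negP => /andP[x y]; exact: (key e x y).
Qed.

Lemma upper_bound n (Tp : {set {set diagT n}}) :
  3 <= n -> (forall T, T \in Tp -> is_triang T) -> KG_colorable Tp (n - 2).
Proof.
move=> n3 hTp.
pose c (A : {set diagT n}) := if [pick j : 'I_n.+1 | has A 1 j] is Some j then (j : nat) - 3 else n - 3.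
have cS : forall (A : {set diagT n}) (j : nat), is_triang A -> has A 1 j -> 3 <= j < n.
  move=> A j hA /hasP[d dA [d1 d2]]; have := triang_diag hA dA; rewrite /is_diag d1 d2; ar.
have cN : forall A : {set diagT n}, (forall j : 'I_n.+1, has A 1 j = false) ->
    forall d, d \in A -> d.1 != 1 :> nat.
  move=> A hn d dA; apply/negP => /eqP d1.
  by move: (hn d.2) => /negbT/negP; apply; apply/hasP; exists d.
exists c; split.
  move=> A /hTp hA; rewrite /c; case: pickP => [j hj|_]; last by ar.
  by have := cS _ _ hA hj; ar.
move=> A B /hTp hA /hTp hB neq disj; apply/negP => /eqP ceq.
have common : forall e, e \in A -> e \in B -> False.
  move=> e eA eB; have : e \in A :&: B by rewrite inE eA eB.
  by rewrite disj in_set0.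
move: ceq; rewrite /c; case: pickP => [j hj|hn1]; case: pickP => [j' hj'|hn2].
- move=> eq; have := cS _ _ hA hj; have := cS _ _ hB hj' => r1 r2.
  case/hasP: hj => d dA [d1 d2]; case/hasP: hj' => d' dB [d1' d2'].
  apply: (common d) => //; suff -> : d = d' by [].
  by apply: diag_eq; [rewrite d1 d1' | rewrite d2 d2'; move: eq r1 r2; ar].
- by have := cS _ _ hA hj; ar.
- by have := cS _ _ hB hj'; ar.
- move=> _; rewrite leq_eqVlt in n3; case/orP: n3 => [/eqP en|n4].
    subst n; move/negP: neq; apply; apply/eqP/setP => d.
    by apply/idP/idP => h; [have := triang_diag hA h | have := triang_diag hB h];
      rewrite nodiag3.
  apply: (common (e2 n)); apply: e2_in_triang => //; exact: cN.
Qed.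

Theorem lemma3p3 (n : nat) (Tp : {set {set diagT n}}) :
  3 <= n ->
  (forall T, T \in Tp -> is_triang T) ->
  (forall T : {set diagT n}, is_triang T ->
     exists2 T', T' \in Tp & swap_triang T T') ->
  KG_chromatic_number Tp (n - 2).
Proof.
move=> n3 hTp hdom; split; first exact: upper_bound.
exact: lower_bound.
Qed.
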